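(* For every nonempty finite poset $X$, \[ Z_{D(X)}(x)=\frac{x^3}{(1-x)^2}\,\frac{d}{dx}Z_X(x),\qquad Z^+_{D(X)}(x)=\frac{x}{(1-x)^2}\,\frac{d}{dx}Z^+_X(x). \] In particular, for $n\ge1$, $Z_{D(\langle n\rangle)}=n\,\zeta_{n+2}+(n+1)\,\zeta_{n+3}$, where $\zeta_j=\frac{x^j}{(1-x)^{j+1}}$.
   Context: For $n\ge1$, $\langle n\rangle$ is the chain $1<\dots<n$. For a finite poset $X$, $\Omega(X,n)$ (resp. $\Omega^+(X,n)$) is the number of maps $f:X\to\langle n\rangle$ with $u<v\Rightarrow f(u)<f(v)$ (resp. $u\le v\Rightarrow f(u)\le f(v)$); $Z_X(x)=\sum_{n\ge1}\Omega(X,n)x^n$ and $Z^+_X(x)=\sum_{n\ge1}\Omega^+(X,n)x^n$. The concatenation $\mu(Y,W)$ is the disjoint union of $Y$ and $W$ with their orders and every element of $Y$ below every element of $W$; $Y\sqcup W$ is the disjoint union with no relations between $Y$ and $W$. The handle operation is $D(X)=\mu\big(\langle1\rangle,\mu(\langle1\rangle\sqcup X,\langle1\rangle)\big)$, i.e. $X$ together with a new minimum $x_0$, a new maximum $x_1$, and a new element $y$ with $x_0<y<x_1$ incomparable to all elements of $X$. *)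

(* Defs.v *)
From mathcomp Require Import all_boot all_order all_algebra.
Set Implicit Arguments. Unset Strict Implicit. Unset Printing Implicit Defensive.
Import GRing.Theory Num.Theory.
Local Open Scope ring_scope.

Definition is_poset (T : finType) (le : rel T) : Prop :=
  [/\ reflexive le, antisymmetric le & transitive le].

Definition slt (T : finType) (le : rel T) : rel T := fun u v => (u != v) && le u v.

(* Omega(X,n): strictly order-preserving maps X -> <n>; the chain <n> = {1<..<n}
   is represented by 'I_n = {0<..<n-1} with the usual order. *)
Definition Omega (T : finType) (le : rel T) (n : nat) : nat :=
  #|[set f : {ffun T -> 'I_n} |
     [forall u, forall v, slt le u v ==> (f u < f v)%N]]|.

Definition OmegaP (T : finType) (le : rel T) (n : nat) : nat :=
  #|[set f : {ffun T -> 'I_n} |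
     [forall u, forall v, le u v ==> (f u <= f v)%N]]|.

Definition fps := nat -> rat.

Definition fadd (f g : fps) : fps := fun n => f n + g n.
Definition fscale (c : rat) (f : fps) : fps := fun n => c * f n.
Definition fmul (f g : fps) : fps := fun n => \sum_(i < n.+1) f i * g (n - i)%N.
Definition fone : fps := fun n => (n == 0%N)%:R.
Definition fX : fps := fun n => (n == 1%N)%:R.
Definition fexp (f : fps) (k : nat) : fps := iter k (fmul f) fone.
Definition fderiv (f : fps) : fps := fun n => f n.+1 *+ n.+1.

Fixpoint fps_inv_seq (f : fps) (n : nat) : seq rat :=
  match n with
  | 0%N => [:: (f 0%N)^-1]
  | m.+1 => let s := fps_inv_seq f m in
            rcons s (- (f 0%N)^-1 *
                       \sum_(1 <= i < n.+1) f i * nth 0 s (n - i)%N)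
  end.
Definition fps_inv (f : fps) : fps := fun n => nth 0 (fps_inv_seq f n) n.

Definition f1mX : fps := fadd fone (fscale (-1) fX).

Definition ZX (T : finType) (le : rel T) : fps :=
  fun n => if n is 0%N then 0 else (Omega le n)%:R.
Definition ZXP (T : finType) (le : rel T) : fps :=
  fun n => if n is 0%N then 0 else (OmegaP le n)%:R.

Definition zeta (j : nat) : fps := fmul (fexp fX j) (fps_inv (fexp f1mX j.+1)).

(* carrier: T + 'I_3, where inr 0 = x0 (new minimum), inr 1 = y, inr 2 = x1 (new max) *)
Definition D_le (T : finType) (le : rel T) : rel (T + 'I_3)%type :=
  fun u v =>
    match u, v with
    | inl a, inl b => le a b
    | inr i, inr j => (i == j) || ((nat_of_ord i < nat_of_ord j)%N)
    | inr i, inl _ => nat_of_ord i == 0%N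
    | inl _, inr j => nat_of_ord j == 2%N
    end.

Definition chain_le (n : nat) : rel 'I_n := fun i j => (i <= j)%N.

(* Main.v *)
Require Import Defs.
From mathcomp Require Import all_boot all_order all_algebra.
From mathcomp Require Import zify.
From Stdlib Require Import FunctionalExtensionality.
Set Implicit Arguments. Unset Strict Implicit. Unset Printing Implicit Defensive.
Import GRing.Theory Num.Theory.
Local Open Scope ring_scope.

Definition tr (N : nat) (f : fps) : {poly rat} := \poly_(i < N) f i.
Lemma coef_tr N f i : (tr N f)`_i = if (i < N)%N then f i else 0.
Proof. by rewrite coef_poly. Qed.
Definition eqN N (p q : {poly rat}) := forall i, (i < N)%N -> p`_i = q`_i.

Lemma eqN_mull N p q r : eqN N p q -> eqN N (r * p) (r * q).
Proof.
move=> H i Hi; rewrite !coefM; apply: eq_bigr => j _; rewrite H //.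
exact: leq_ltn_trans (leq_subr _ _) Hi.
Qed.
Lemma eqN_mulr N p q r : eqN N p q -> eqN N (p * r) (q * r).
Proof.
move=> H i Hi; rewrite !coefM; apply: eq_bigr => j _; rewrite H //.
have := ltn_ord j; rewrite ltnS => Hj; exact: leq_ltn_trans Hj Hi.
Qed.
Lemma eqN_trans N p q r : eqN N p q -> eqN N q r -> eqN N p r.
Proof. by move=> H1 H2 i Hi; rewrite H1 // H2. Qed.
Lemma eqN_exp N p q k : eqN N p q -> eqN N (p ^+ k) (q ^+ k).
Proof.
move=> H; elim: k => [|k IH]; first by move=> i.
rewrite !exprS; apply: eqN_trans (eqN_mulr _ H) _; exact: eqN_mull.
Qed.

Lemma fmulE N f g n : (n < N)%N -> fmul f g n = (tr N f * tr N g)`_n.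
Proof.
move=> Hn; rewrite coefM /fmul; apply: eq_bigr => j _; rewrite !coef_tr.
have := ltn_ord j; rewrite ltnS => Hj; rewrite ifT; last exact: leq_ltn_trans Hj Hn.
by rewrite ifT //; exact: leq_ltn_trans (leq_subr _ _) Hn.
Qed.
Lemma tr_fmul N f g : eqN N (tr N (fmul f g)) (tr N f * tr N g).
Proof. by move=> i Hi; rewrite coef_tr Hi (fmulE _ _ Hi). Qed.
Lemma tr_fexp N f k : eqN N (tr N (fexp f k)) ((tr N f) ^+ k).
Proof.
elim: k => [|k IH] i Hi.
  by rewrite coef_tr Hi /= /fone coef1.
rewrite /= -/(fexp f k) (@tr_fmul N f (fexp f k) i Hi) exprS.
exact: (eqN_mull _ IH).
Qed.
Lemma tr_f1mX N : eqN N (tr N f1mX) (1 - 'X).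
Proof.
move=> i Hi; rewrite coef_tr Hi coefB coef1 coefX /f1mX /fadd /fscale /fone /fX.
by rewrite mulN1r.
Qed.
Lemma tr_fX N : eqN N (tr N fX) 'X.
Proof. by move=> i Hi; rewrite coef_tr Hi coefX. Qed.

Lemma fps_inv_seq_size f n : size (fps_inv_seq f n) = n.+1.
Proof. by elim: n => [|n IH] //=; rewrite size_rcons IH. Qed.
Lemma fps_inv_seq_nth f n i : (i <= n)%N -> nth 0 (fps_inv_seq f n) i = fps_inv f i.
Proof.
elim: n i => [|n IH] i Hi; first by move: Hi; rewrite leqn0 => /eqP ->.
case: (ltnP i n.+1) => Hin.
  by rewrite /= nth_rcons fps_inv_seq_size Hin IH.
by have -> : i = n.+1 by apply/eqP; rewrite eqn_leq Hi Hin.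
Qed.
Lemma fps_invS f n : fps_inv f n.+1 =
  - (f 0%N)^-1 * \sum_(1 <= i < n.+2) f i * fps_inv f (n.+1 - i)%N.
Proof.
rewrite {1}/fps_inv /= nth_rcons fps_inv_seq_size ltnn eqxx; congr (_ * _).
apply: eq_big_nat => i /andP[Hi _]; rewrite fps_inv_seq_nth //.
by case: i Hi => // i _; rewrite subSS leq_subr.
Qed.

Lemma fps_inv_unique f g : f 0%N = 1 -> (forall n, fmul f g n = fone n) ->
  forall n, fps_inv f n = g n.
Proof.
move=> f0 H; elim/ltn_ind => -[|n] IH.
  have := H 0%N; rewrite /fmul big_ord1 f0 mul1r /fone /= => ->.
  by rewrite /fps_inv /= f0 invr1.
rewrite fps_invS f0 invr1 mulN1r.
have := H n.+1; rewrite /fmul big_ord_recl f0 mul1r /fone /= subn0 => Hs.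
rewrite big_add1 /= big_mkord.
have -> : \sum_(i < n.+1) f i.+1 * fps_inv f (n.+1 - i.+1)%N =
          \sum_(i < n.+1) f (bump 0 i) * g (n.+1 - bump 0 i)%N.
  apply: eq_bigr => i _; rewrite /bump /= add1n IH // subSS ltnS leq_subr //.
by apply/eqP; rewrite eq_sym -subr_eq0 opprK Hs.
Qed.

Definition Gs (K : nat) : fps := fun i => ('C(i + K, i))%:R.

Lemma coef_1mX (p : {poly rat}) i :
  ((1 - 'X) * p)`_i = p`_i - (if i == 0%N then 0 else p`_i.-1).
Proof. by rewrite mulrBl mul1r coefB coefXM. Qed.

Lemma pascal N K : eqN N ((1 - 'X) * tr N (Gs K.+1)) (tr N (Gs K)).
Proof.
move=> i Hi; rewrite coef_1mX !coef_tr Hi.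
case: i Hi => [|j] Hj /=; first by rewrite /Gs !add0n !bin0 subr0.
rewrite ifT; last exact: ltnW.
rewrite /Gs.
have -> : (j.+1 + K.+1 = (j.+1 + K).+1)%N by rewrite addnS.
rewrite binS natrD.
have -> : (j + K.+1 = j.+1 + K)%N by rewrite addnS addSn.
by rewrite addrK.
Qed.

Lemma key N K : eqN N ((1 - 'X) ^+ K.+1 * tr N (Gs K)) 1.
Proof.
elim: K => [|K IH] i Hi.
  rewrite expr1 coef_1mX !coef_tr Hi coef1 /Gs.
  case: i Hi => [|j] Hj /=; first by rewrite bin0 subr0.
  by rewrite ifT ?(ltnW Hj) // !addn0 !binn subrr.
rewrite (exprSr (1 - ('X : {poly rat})) K.+1) -mulrA.
rewrite (@eqN_mull N _ _ ((1 - 'X) ^+ K.+1) (@pascal N K) i Hi).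
exact: IH.
Qed.

Lemma coef0_1mX k : (((1 : {poly rat}) - 'X) ^+ k)`_0 = 1.
Proof.
elim: k => [|k IH]; first by rewrite expr0 coef1.
by rewrite exprS coef0M IH mulr1 coefB coef1 coefX subr0.
Qed.

Lemma inv_pow K i : fps_inv (fexp f1mX K.+1) i = Gs K i.
Proof.
apply: fps_inv_unique => [|n].
  rewrite -(@coef0_1mX K.+1).
  have := (@tr_fexp 1 f1mX K.+1 0 isT); rewrite coef_tr /= => ->.
  exact: (@eqN_exp 1 _ _ K.+1 (@tr_f1mX 1) 0 isT).
rewrite (@fmulE n.+1) //.
rewrite (@eqN_mulr n.+1 _ _ _ (eqN_trans (@tr_fexp n.+1 f1mX K.+1) (eqN_exp K.+1 (@tr_f1mX n.+1)))) //.
by rewrite key // coef1 /fone.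
Qed.

Lemma trN_exp_fX N j : eqN N (tr N (fexp fX j)) ('X ^+ j).
Proof. move=> i Hi; rewrite (@tr_fexp N fX j i Hi); exact: (@eqN_exp N _ _ j (@tr_fX N) i Hi). Qed.

Lemma coef_XjG j K i :
  fmul (fexp fX j) (fps_inv (fexp f1mX K.+1)) i =
  if (i < j)%N then 0 else ('C(i - j + K, i - j))%:R.
Proof.
rewrite (@fmulE i.+1) // (@eqN_mulr i.+1 _ _ _ (@trN_exp_fX i.+1 j)) //.
rewrite coefXnM; case: ifP => // _.
by rewrite coef_tr ltnS leq_subr inv_pow.
Qed.

Lemma c3E i : fmul (fexp fX 3) (fps_inv (fexp f1mX 2)) i = (i - 2)%N%:R.
Proof.
rewrite coef_XjG; case: ifP => Hi.
  by have -> : (i - 2 = 0)%N by lia.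
rewrite addn1 binSn; congr (_%:R); lia.
Qed.

Lemma c1E i : fmul fX (fps_inv (fexp f1mX 2)) i = i%:R.
Proof.
rewrite (@fmulE i.+1) // (@eqN_mulr i.+1 _ _ _ (@tr_fX i.+1)) //.
rewrite coefXM; case: i => // i /=.
by rewrite coef_tr ltnS leqnSn (inv_pow 1) /Gs addn1 binSn.
Qed.

Lemma zetaE j i : zeta j i = ('C(i, j))%:R.
Proof.
rewrite /zeta coef_XjG; case: ifP => Hi; first by rewrite bin_small.
rewrite subnK ?bin_sub //; lia.
Qed.

Local Open Scope nat_scope.

Definition cnt (T : finType) (r : rel T) (R : rel nat) (n : nat) : nat :=
  #|[set f : {ffun T -> 'I_n} | [forall u, forall v, r u v ==> R (f u) (f v)]]|.

Lemma card_sum (T : finType) (P : pred T) : #|[set x | P x]| = \sum_x (P x : nat).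
Proof.
rewrite -sum1_card big_mkcond /=; apply: eq_bigr => x _; rewrite inE.
by case: (P x).
Qed.

Lemma shift_cnt (T : finType) (r : rel T) (R : rel nat) n lo len (Q : pred nat) :
  lo + len <= n -> (forall x, Q x = (lo <= x < lo + len)) ->
  (forall x y, R (x + lo) (y + lo) = R x y) ->
  #|[set g : {ffun T -> 'I_n} |
     [forall u, forall v, r u v ==> R (g u) (g v)] && [forall u, Q (g u)]]|
  = cnt r R len.
Proof.
move=> Hn HQ HR.
have Hphi : forall x : 'I_len, x + lo < n by move=> x; have := ltn_ord x; lia.
pose phi (g : {ffun T -> 'I_len}) : {ffun T -> 'I_n} :=
  [ffun u => Ordinal (Hphi (g u))].
have phi_inj : injective phi.
  move=> g1 g2 /ffunP H; apply/ffunP => u; have := H u; rewrite !ffunE.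
  by move=> /(congr1 val) /= /addIn /val_inj.
rewrite /cnt -(card_imset _ phi_inj); apply: eq_card => g.
rewrite inE; apply/idP/imsetP.
  move=> /andP[/forallP Hc /forallP HQg].
  have Hg : forall u, g u - lo < len.
    by move=> u; move: (HQg u); rewrite HQ => /andP[H1 H2]; rewrite ltn_subLR.
  have Hgl : forall u, lo <= g u.
    by move=> u; move: (HQg u); rewrite HQ => /andP[H1 H2].
  exists [ffun u => Ordinal (Hg u)].
    rewrite inE; apply/forallP => u; apply/forallP => v; rewrite !ffunE /=.
    by rewrite -HR !subnK ?Hgl //; exact: (forallP (Hc u) v).
  by apply/ffunP => u; rewrite !ffunE; apply: val_inj; rewrite /= subnK ?Hgl.
move=> [g' Hg' ->]; rewrite inE in Hg'; apply/andP; split.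
  apply/forallP => u; apply/forallP => v; rewrite !ffunE /= HR.
  exact: (forallP ((forallP Hg') u) v).
apply/forallP => u; rewrite ffunE /= HQ leq_addl /= addnC ltn_add2l; exact: ltn_ord.
Qed.

Lemma count_int n lo len (Q : pred nat) : lo + len <= n ->
  (forall x, Q x = (lo <= x < lo + len)) -> \sum_(c < n) (Q c : nat) = len.
Proof.
move=> Hn HQ.
rewrite -(big_mkord predT (fun c => nat_of_bool (Q c))).
rewrite (big_cat_nat (leq0n lo)); last by lia.
rewrite big1_seq /=; last first.
  by move=> i; rewrite mem_index_iota HQ => /andP[_ H]; apply/eqP; rewrite eqb0; lia.
rewrite add0n (big_cat_nat (leq_addr len lo : lo <= lo + len)) //=.
rewrite [X in _ + X]big1_seq /=; last first.
  by move=> i; rewrite mem_index_iota HQ => /andP[H _]; rewrite ltnNge H andbF.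
rewrite (eq_big_nat _ _ (F2 := fun _ => 1)); last first.
  by move=> i Hi; rewrite HQ Hi.
by rewrite sum_nat_const_nat; lia.
Qed.

Definition i0 : 'I_3 := @Ordinal 3 0 isT.
Definition i1 : 'I_3 := @Ordinal 3 1 isT.
Definition i2 : 'I_3 := @Ordinal 3 2 isT.

Lemma sum_pair (A B : finType) (F : A * B -> nat) :
  \sum_p F p = \sum_a \sum_b F (a, b).
Proof. by rewrite pair_big; apply: eq_bigr => -[]. Qed.

Section Dec.
Variables (T : finType) (rD : rel (T + 'I_3)%type) (r : rel T) (R : rel nat).
Hypothesis Hll : forall u v, rD (inl u) (inl v) = r u v.
Hypothesis Hlr : forall u j, rD (inl u) (inr j) = (val j == 2).
Hypothesis Hrl : forall i v, rD (inr i) (inl v) = (val i == 0).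
Variable n : nat.

Definition hv (a b c : 'I_n) (i : 'I_3) : 'I_n :=
  if val i == 0 then a else if val i == 1 then c else b.

Definition psi (p : 'I_n * ('I_n * ('I_n * {ffun T -> 'I_n}))) :
  {ffun (T + 'I_3)%type -> 'I_n} :=
  [ffun x => match x with inl u => p.2.2.2 u | inr i => hv p.1 p.2.1 p.2.2.1 i end].
Definition psi' (F : {ffun (T + 'I_3)%type -> 'I_n}) :
  'I_n * ('I_n * ('I_n * {ffun T -> 'I_n})) :=
  (F (inr i0), (F (inr i2), (F (inr i1), [ffun u => F (inl u)]))).

Lemma psiK : cancel psi psi'.
Proof.
move=> [a [b [c g]]]; rewrite /psi' !ffunE /hv /=; congr (_, (_, (_, _))).
by apply/ffunP => u; rewrite !ffunE.
Qed.
Lemma psi'K : cancel psi' psi.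
Proof.
move=> F; apply/ffunP => -[u|i]; rewrite !ffunE //= /hv.
case: i => -[|[|[|k]]] Hk //=; congr (F (inr _)); exact: val_inj.
Qed.

Definition P3 (a b c : 'I_n) :=
  [forall i, forall j, rD (inr i) (inr j) ==> R (hv a b c i) (hv a b c j)].
Definition condX (g : {ffun T -> 'I_n}) :=
  [forall u, forall v, r u v ==> R (g u) (g v)].

Lemma cond_psi a b c g :
  [forall x, forall y, rD x y ==> R (psi (a, (b, (c, g))) x) (psi (a, (b, (c, g))) y)]
  = P3 a b c && (condX g && [forall u, R a (g u) && R (g u) b]).
Proof.
apply/idP/idP.
  move=> /forallP H.
  have H' : forall x y, rD x y -> R (psi (a, (b, (c, g))) x) (psi (a, (b, (c, g))) y).
    by move=> x y; move/forallP: (H x) => /(_ y) /implyP.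
  apply/andP; split.
    apply/forallP => i; apply/forallP => j; apply/implyP => h.
    by have := H' _ _ h; rewrite !ffunE.
  apply/andP; split.
    apply/forallP => u; apply/forallP => v; apply/implyP => h.
    by rewrite -Hll in h; have := H' _ _ h; rewrite !ffunE.
  apply/forallP => u; apply/andP; split.
    have h : rD (inr i0) (inl u) by rewrite Hrl.
    by have := H' _ _ h; rewrite !ffunE.
  have h : rD (inl u) (inr i2) by rewrite Hlr.
  by have := H' _ _ h; rewrite !ffunE.
move=> /andP[/forallP P /andP[/forallP C /forallP Rg]].
apply/forallP => -[u|i]; apply/forallP => -[v|j]; rewrite !ffunE ?Hll ?Hlr ?Hrl.
- by move/forallP: (C u).
- apply/implyP => /eqP Hj; rewrite /hv Hj /=; by case/andP: (Rg u).
- apply/implyP => /eqP Hi; rewrite /hv Hi /=; by case/andP: (Rg v).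
- by move/forallP: (P i).
Qed.

Lemma countD :
  #|[set F : {ffun (T + 'I_3)%type -> 'I_n} | [forall x, forall y, rD x y ==> R (F x) (F y)]]|
  = \sum_(a < n) \sum_(b < n) \sum_(c < n)
      P3 a b c * #|[set g : {ffun T -> 'I_n} | condX g && [forall u, R a (g u) && R (g u) b]]|.
Proof.
rewrite card_sum (reindex psi) /=; last first.
  by apply: onW_bij; exists psi'; [exact: psiK | exact: psi'K].
rewrite sum_pair; apply: eq_bigr => a _.
rewrite sum_pair; apply: eq_bigr => b _.
rewrite sum_pair; apply: eq_bigr => c _.
rewrite card_sum big_distrr /=; apply: eq_bigr => g _.
by rewrite cond_psi mulnb.
Qed.
End Dec.

Section Spec.
Variables (T : finType) (le : rel T).

Lemma sHll u v : slt (D_le le) (inl u) (inl v) = slt le u v.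
Proof. by []. Qed.
Lemma sHlr u (j : 'I_3) : slt (D_le le) (inl u) (inr j) = (val j == 2).
Proof. by []. Qed.
Lemma sHrl (i : 'I_3) v : slt (D_le le) (inr i) (inl v) = (val i == 0).
Proof. by []. Qed.
Lemma wHll u v : D_le le (inl u) (inl v) = le u v.
Proof. by []. Qed.
Lemma wHlr u (j : 'I_3) : D_le le (inl u) (inr j) = (val j == 2).
Proof. by []. Qed.
Lemma wHrl (i : 'I_3) v : D_le le (inr i) (inl v) = (val i == 0).
Proof. by []. Qed.

Lemma sP3 n (a b c : 'I_n) : P3 (slt (D_le le)) ltn a b c = (a < c) && (c < b).
Proof.
apply/idP/andP.
  move=> /forallP H; split.
    by move/forallP: (H i0) => /(_ i1) /implyP; apply.
  by move/forallP: (H i1) => /(_ i2) /implyP; apply.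
move=> [H1 H2]; apply/forallP => -[[|[|[|i]]] Hi]; apply/forallP => -[[|[|[|j]]] Hj] //=;
  rewrite /hv /=; apply/implyP => //; rewrite /slt /=; try lia.
Qed.

Lemma wP3 n (a b c : 'I_n) : P3 (D_le le) leq a b c = (a <= c) && (c <= b).
Proof.
apply/idP/andP.
  move=> /forallP H; split.
    by move/forallP: (H i0) => /(_ i1) /implyP; apply.
  by move/forallP: (H i1) => /(_ i2) /implyP; apply.
move=> [H1 H2]; apply/forallP => -[[|[|[|i]]] Hi]; apply/forallP => -[[|[|[|j]]] Hj] //=;
  rewrite /hv /=; apply/implyP => //; try lia.
Qed.

Definition hs (d : nat) := (0 < d) * ((d - 1) * cnt (slt le) ltn (d - 1)).
Definition hw (d : nat) := (d + 1) * cnt le leq (d + 1).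

Lemma sab n (a b : 'I_n) :
  (\sum_(c < n) P3 (slt (D_le le)) ltn a b c) *
  #|[set g : {ffun T -> 'I_n} | condX (slt le) ltn g && [forall u, (a < g u) && (g u < b)]]|
  = (a <= b) * hs (b - a).
Proof.
under eq_bigr do rewrite sP3.
case: (ltnP a b) => Hab.
  rewrite (@count_int n (a.+1) (b - a - 1) (fun x => (a < x) && (x < b))); last 2 first.
  - have := ltn_ord b; lia.
  - move=> x; apply/idP/idP; move/andP=> [? ?]; apply/andP; split; lia.
  rewrite (@shift_cnt _ _ _ n (a.+1) (b - a - 1) (fun x => (a < x) && (x < b))); last 3 first.
  - have := ltn_ord b; lia.
  - move=> x; apply/idP/idP; move/andP=> [? ?]; apply/andP; split; lia.
  - by move=> x y; exact: ltn_add2r.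
  rewrite /hs ltnW // subn_gt0 Hab; lia.
rewrite big1; last by move=> c _; apply/eqP; rewrite eqb0; apply/negP => /andP[? ?]; lia.
by rewrite mul0n /hs (_ : b - a = 0) ?muln0 //; apply/eqP; rewrite subn_eq0.
Qed.

Lemma wab n (a b : 'I_n) :
  (\sum_(c < n) P3 (D_le le) leq a b c) *
  #|[set g : {ffun T -> 'I_n} | condX le leq g && [forall u, (a <= g u) && (g u <= b)]]|
  = (a <= b) * hw (b - a).
Proof.
under eq_bigr do rewrite wP3.
case: (leqP a b) => Hab.
  rewrite (@count_int n a (b - a + 1) (fun x => (a <= x) && (x <= b))); last 2 first.
  - have := ltn_ord b; lia.
  - move=> x; apply/idP/idP; move/andP=> [? ?]; apply/andP; split; lia.
  rewrite (@shift_cnt _ _ _ n a (b - a + 1) (fun x => (a <= x) && (x <= b))); last 3 first.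
  - have := ltn_ord b; lia.
  - move=> x; apply/idP/idP; move/andP=> [? ?]; apply/andP; split; lia.
  - by move=> x y; exact: leq_add2r.
  by rewrite /hw mul1n.
rewrite big1; last by move=> c _; apply/eqP; rewrite eqb0; apply/negP => /andP[? ?]; lia.
by rewrite mul0n.
Qed.
End Spec.

Lemma pair_sum n (h : nat -> nat) :
  \sum_(a < n) \sum_(b < n) (a <= b) * h (b - a) = \sum_(d < n) (n - d) * h d.
Proof.
elim: n => [|n IH]; first by rewrite !big_ord0.
rewrite big_ord_recr /=.
under eq_bigr do rewrite big_ord_recr /=.
rewrite big_split /= IH.
rewrite [X in _ + X = _]big_ord_recr /= [X in _ + (X + _) = _]big1; last by move=> b _; rewrite leqNgt ltn_ord.
rewrite leqnn subnn add0n mul1n.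
have E1 : \sum_(d < n.+1) (n.+1 - d) * h d =
          \sum_(d < n.+1) (n - d) * h d + \sum_(d < n.+1) h d.
  rewrite -big_split; apply: eq_bigr => d _ /=.
  have Hd : d <= n by rewrite -ltnS.
  by rewrite subSn // mulSn addnC.
rewrite E1 [X in X + _ = _ + _]addnC [X in _ = X + _]big_ord_recr /= subnn mul0n addn0.
rewrite big_ord_recl /=.
have E2 : \sum_(i < n) (i <= n) * h (n - i) = \sum_(i < n) h (bump 0 i).
  rewrite (reindex_inj rev_ord_inj) /=; apply: eq_bigr => i _.
  rewrite /bump /= add1n leq_subr mul1n.
  have Hi := ltn_ord i.
  by rewrite subKn.
rewrite E2 -addnA [in LHS]addnC -addnA; congr (_ + _).
Qed.

Lemma OmegaD_s (T : finType) (le : rel T) n :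
  Omega (D_le le) n = \sum_(d < n) (n - d) * hs le d.
Proof.
rewrite /Omega (@countD T (slt (D_le le)) (slt le) ltn (@sHll T le) (@sHlr T le) (@sHrl T le)).
rewrite -pair_sum; apply: eq_bigr => a _; apply: eq_bigr => b _.
by rewrite -big_distrl /= sab.
Qed.

Lemma OmegaD_w (T : finType) (le : rel T) n :
  OmegaP (D_le le) n = \sum_(d < n) (n - d) * hw le d.
Proof.
rewrite /OmegaP (@countD T (D_le le) le leq (@wHll T le) (@wHlr T le) (@wHrl T le)).
rewrite -pair_sum; apply: eq_bigr => a _; apply: eq_bigr => b _.
by rewrite -big_distrl /= wab.
Qed.

Lemma slt_chain n (u v : 'I_n) : slt (@chain_le n) u v = (u < v).
Proof. by rewrite /slt /chain_le ltn_neqAle. Qed.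

Lemma nth_val_tuple n k (t : n.-tuple 'I_k) (u : 'I_n) :
  nth 0 [seq val x | x <- t] u = tnth t u.
Proof. by rewrite (nth_map (tnth t u)) ?size_tuple // -tnth_nth. Qed.

Lemma Omega_chain n k : Omega (@chain_le n) k = 'C(k, n).
Proof.
rewrite -(card_ltn_sorted_tuples n k) /Omega.
pose phi (t : n.-tuple 'I_k) : {ffun 'I_n -> 'I_k} := [ffun i => tnth t i].
have phi_inj : injective phi.
  move=> t1 t2 /ffunP H; apply: eq_from_tnth => i; have := H i; by rewrite !ffunE.
rewrite -(card_imset _ phi_inj); apply: eq_card => f; rewrite inE; apply/idP/imsetP.
  move=> Hf; exists [tuple f i | i < n]; last first.
    by apply/ffunP => i; rewrite !ffunE tnth_mktuple.
  rewrite inE; apply/(sortedP 0) => i; rewrite size_map size_tuple => Hi.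
  have Hi0 : i < n by apply: ltnW.
  have E1 := nth_val_tuple [tuple f i | i < n] (Ordinal Hi0).
  have E2 := nth_val_tuple [tuple f i | i < n] (Ordinal Hi).
  simpl in E1, E2; rewrite E1 E2 !tnth_mktuple.
  move: (forallP (forallP Hf (Ordinal Hi0)) (Ordinal Hi)) => /implyP; apply.
  by rewrite slt_chain /=.
move=> [t Ht ->]; rewrite inE in Ht.
apply/forallP => u; apply/forallP => v; apply/implyP; rewrite slt_chain => Huv.
rewrite !ffunE -!nth_val_tuple.
apply: (sorted_ltn_nth ltn_trans 0 Ht) => //; by rewrite inE size_map size_tuple.
Qed.

Lemma idW n (W : nat -> nat) :
  \sum_(d < n) (n - d) * ((d + 1) * W (d + 1)) =
  \sum_(i < n.+1) i * ((n - i).+1 * W (n - i).+1).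
Proof.
rewrite [RHS](reindex_inj rev_ord_inj) /= [RHS]big_ord_recr /= subnn mul0n addn0.
apply: eq_bigr => i _; have Hi := ltn_ord i.
rewrite subSS subKn ?addn1 //; exact: ltnW.
Qed.

Lemma idS n (W : nat -> nat) :
  \sum_(d < n) (n - d) * ((0 < d) * ((d - 1) * W (d - 1))) =
  \sum_(i < n.+1) (i - 2) * ((n - i).+1 * W (n - i).+1).
Proof.
rewrite [RHS](reindex_inj rev_ord_inj) /=.
rewrite -(big_mkord xpredT (fun d => (n - d) * ((0 < d) * ((d - 1) * W (d - 1))))).
rewrite -(big_mkord xpredT (fun i => (n - i - 2) * ((n - (n - i)).+1 * W (n - (n - i)).+1))).
have -> : \sum_(0 <= d < n) (n - d) * ((0 < d) * ((d - 1) * W (d - 1))) =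
          \sum_(0 <= d < n.+2) (n - d) * ((0 < d) * ((d - 1) * W (d - 1))).
  have E : n - n.+1 = 0 by lia.
  by rewrite !big_nat_recr //= subnn E !mul0n !addn0.
rewrite [LHS]big_nat_recl // [X in _ + X = _]big_nat_recl // /=.
rewrite !mul0n !muln0 !add0n.
rewrite [RHS]big_nat_recr //= subnn sub0n mul0n addn0.
apply: eq_big_nat => i /andP[_ Hi].
rewrite subKn ?mul1n; last exact: ltnW.
rewrite subSS subn0; congr (_ * _); lia.
Qed.

Lemma sumG n m : \sum_(d < m) d * 'C(d, n) = n * 'C(m, n.+1) + n.+1 * 'C(m, n.+2).
Proof.
elim: m => [|m IH]; first by rewrite big_ord0 !bin0n /= !muln0.
rewrite big_ord_recr /= IH !binS !mulnDr (mul_bin_left m n).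
have E : m * 'C(m, n) = n * 'C(m, n) + (m - n) * 'C(m, n).
  case: (leqP n m) => H; first by rewrite -mulnDl subnKC.
  by rewrite bin_small // !muln0.
rewrite E; nia.
Qed.

Lemma idC n m :
  \sum_(d < m) (m - d) * ((0 < d) * ((d - 1) * 'C(d - 1, n))) =
  n * 'C(m, n.+2) + n.+1 * 'C(m, n.+3).
Proof.
elim: m => [|m IH]; first by rewrite big_ord0 !bin0n /= !muln0.
have E1 : \sum_(d < m.+1) (m.+1 - d) * ((0 < d) * ((d - 1) * 'C(d - 1, n))) =
          \sum_(d < m.+1) (m - d) * ((0 < d) * ((d - 1) * 'C(d - 1, n)))
          + \sum_(d < m.+1) ((0 < d) * ((d - 1) * 'C(d - 1, n))).
  rewrite -big_split; apply: eq_bigr => d _ /=.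
  have Hd : d <= m by rewrite -ltnS.
  by rewrite subSn // mulSn addnC.
rewrite E1 big_ord_recr /= subnn mul0n addn0 IH big_ord_recl /= mul0n add0n.
have -> : \sum_(i < m) (0 < bump 0 i) * ((bump 0 i - 1) * 'C(bump 0 i - 1, n))
          = \sum_(d < m) d * 'C(d, n).
  by apply: eq_bigr => i _; rewrite /bump /= add1n subn1 /= mul1n.
rewrite sumG !binS; nia.
Qed.

Local Open Scope ring_scope.

Lemma fmul_deriv_nat (c : fps) (cn : nat -> nat) (Z : fps) (Om : nat -> nat) m :
  (forall i, c i = (cn i)%:R) -> (forall k, Z k.+1 = (Om k.+1)%:R) ->
  fmul c (fderiv Z) m = (\sum_(i < m.+1) cn i * ((m - i).+1 * Om (m - i).+1))%N%:R.
Proof.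
move=> Hc HZ; rewrite /fmul natr_sum; apply: eq_bigr => i _.
by rewrite /fderiv Hc HZ -mulrnA -natrM (mulnC (Om _)).
Qed.

Theorem mainTheorem6 :
  (forall (T : finType) (le : rel T), is_poset le -> (0 < #|T|)%N ->
     ZX (D_le le) = fmul (fmul (fexp fX 3) (fps_inv (fexp f1mX 2))) (fderiv (ZX le))
  /\ ZXP (D_le le) = fmul (fmul fX (fps_inv (fexp f1mX 2))) (fderiv (ZXP le)))
  /\
  (forall n : nat, (1 <= n)%N ->
     ZX (D_le (@chain_le n)) =
       fadd (fscale n%:R (zeta n.+2)) (fscale n.+1%:R (zeta n.+3))).
Proof.
split.
  move=> T le _ _; split; apply: functional_extensionality => m.
    rewrite (fmul_deriv_nat (cn := fun i => (i - 2)%N) (Om := Omega le)) //; last exact: c3E.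
    rewrite -idS -(OmegaD_s le).
    by case: m => [|m] //; rewrite OmegaD_s big_ord0.
  rewrite (fmul_deriv_nat (cn := fun i => i) (Om := OmegaP le)) //; last exact: c1E.
  rewrite -idW -(OmegaD_w le).
  by case: m => [|m] //; rewrite OmegaD_w big_ord0.
move=> n _; apply: functional_extensionality => m.
rewrite /fadd /fscale !zetaE -!natrM -natrD.
have -> : ZX (D_le (@chain_le n)) m = (Omega (D_le (@chain_le n)) m)%:R.
  by case: m => [|m] //; rewrite OmegaD_s big_ord0.
rewrite OmegaD_s -idC; congr (_%:R); apply: eq_bigr => d _.
by rewrite /hs -(Omega_chain n (d - 1)).
Qed.
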